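(* Let $g:[0,1]\to\mathbb R$ be continuous and concave. Then the limit $$\Gamma_g=\lim_{n\to\infty}\frac1n\log\mathbb{E}\Big(e^{n g(H_n/n)}\Big)$$ exists (as a real number).
   Context: Standing setup (discrete-time Hawkes process, DTHP). Let $(a_i)_{i=0}^\infty$ be a sequence of strictly positive real numbers with $\sum_{i=0}^\infty a_i<1$ and $\sum_{i=1}^\infty i\,a_i<\infty$. The arrival process $\{\xi_n\}_{n\ge1}$ is a sequence of $\{0,1\}$-valued random variables on a probability space $(\Omega,\mathcal F,\mathbb P)$ with $\mathbb{P}(\xi_1=1)=a_0$, $\mathbb P(\xi_1=0)=1-a_0$, and for $n\ge2$, $$\mathbb{P}(\xi_n=1\mid \xi_1,\dots,\xi_{n-1})=a_0+\sum_{i=1}^{n-1}a_{n-i}\xi_i,\qquad \mathbb{P}(\xi_n=0\mid \xi_1,\dots,\xi_{n-1})=1-\Big(a_0+\sum_{i=1}^{n-1}a_{n-i}\xi_i\Big).$$ The DTHP is $H_n=\sum_{i=1}^n\xi_i$, and $\mathcal F_n=\sigma(\xi_1,\dots,\xi_n)$. *)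

(* Defs.v *)
From HB Require Import structures.
From mathcomp Require Import all_boot all_order all_algebra.
From mathcomp Require Import all_classical all_reals all_analysis.
Set Implicit Arguments. Unset Strict Implicit. Unset Printing Implicit Defensive.
Import Order.TTheory GRing.Theory Num.Theory numFieldNormedType.Exports.
Local Open Scope ring_scope.
Local Open Scope classical_set_scope.

Definition dthp_kernel {R : realType} (a : R^nat) : Prop :=
  (forall i, 0 < a i) /\
  cvgn (series a) /\ limn (series a) < 1 /\
  cvgn (series (fun i => i%:R * a i)).

(* Conditional probability P(xi_{j+1} = 1 | xi_1, ..., xi_j), where the
   (0-based) coordinate x i stands for xi_{i+1}:
   a_0 + sum_{i=1}^{j} a_{j+1-i} xi_i. *)
Definition dthp_rate {R : realType} (a : R^nat) (n : nat)
  (x : {ffun 'I_n -> bool}) (j : 'I_n) : R :=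
  a 0%N + \sum_(i < n | (i < j)%N) a (j - i)%N * (x i)%:R.

Definition dthp_pathprob {R : realType} (a : R^nat) (n : nat)
  (x : {ffun 'I_n -> bool}) : R :=
  \prod_(j < n) (if x j then dthp_rate a x j else 1 - dthp_rate a x j).

Definition dthp_H {R : realType} (n : nat) (x : {ffun 'I_n -> bool}) : R :=
  \sum_(j < n) (x j)%:R.

Definition dthp_expect {R : realType} (a : R^nat) (g : R -> R) (n : nat) : R :=
  \sum_(x : {ffun 'I_n -> bool})
     dthp_pathprob a x * expR (n%:R * g (dthp_H x / n%:R)).

Definition concave_on01 {R : realType} (g : R -> R) : Prop :=
  forall x y t : R, 0 <= x <= 1 -> 0 <= y <= 1 -> 0 <= t <= 1 ->
    t * g x + (1 - t) * g y <= g (t * x + (1 - t) * y).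

(* Main.v *)
Require Import Defs.
From HB Require Import structures.
From mathcomp Require Import all_boot all_order all_algebra.
From mathcomp Require Import all_classical all_reals all_analysis.
From mathcomp Require Import lra ring zify.
Import Order.TTheory GRing.Theory Num.Theory numFieldNormedType.Exports.
Local Open Scope ring_scope.
Local Open Scope classical_set_scope.
Lemma superadd_mul (R : realType) (w : nat -> R) :
  (forall n m, w n + w m <= w (n + m)%N) ->
  forall q k, q.+1%:R * w k <= w (q.+1 * k)%N.
Proof.
move=> Hw; elim=> [|q IH] k; first by rewrite mul1r mul1n.
rewrite mulSn addnC -natr1 mulrDl mul1r; apply: le_trans (Hw _ _).
by rewrite lerD2r.
Qed.

Lemma fekete (R : realType) (u : nat -> R) (K B : R) : 0 <= K ->
  (forall n m, u n + u m - K <= u (n + m)%N) -> (forall n, u n <= n%:R * B) ->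
  exists L : R, (fun n : nat => n%:R^-1 * u n) @ \oo --> L.
Proof.
move=> K0 Hu HB.
pose w n := u n - K.
have Hw : forall n m, w n + w m <= w (n + m)%N.
  by move=> n m; rewrite /w; have := Hu n m; lra.
pose S := [set x : R | exists2 n, (0 < n)%N & x = n%:R^-1 * w n].
have hS : has_sup S.
  split; first by exists (1%:R^-1 * w 1%N); exists 1%N.
  exists B => x [n n0 ->].
  rewrite ler_pdivrMl ?ltr0n //; apply: le_trans (HB n); rewrite /w; lra.
exists (sup S); apply/cvgrPdist_le => e e0.
have e20 : 0 < e / 2 by rewrite divr_gt0.
have [x [k k0 ->] Hk] := sup_adherent e20 hS.
pose A := \sum_(r < k) `|w r|.
pose C := K + `|w k| + A.
have A0 : 0 <= A by apply: sumr_ge0 => i _.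
have C0 : 0 <= C by rewrite /C; have := normr_ge0 (w k); lra.
exists (Num.Def.truncn (C * 2 / e)).+1 => // n /= Hn.
have n0 : (0 < n)%N by apply: leq_trans Hn.
have nR0 : 0 < n%:R :> R by rewrite ltr0n.
have kR0 : 0 < k%:R :> R by rewrite ltr0n.
have HC : n%:R^-1 * C <= e / 2.
  rewrite ler_pdivrMl //.
  have := truncnS_gt (C * 2 / e).
  have : (Num.Def.truncn (C * 2 / e)).+1%:R <= n%:R :> R by rewrite ler_nat.
  move=> h1 h2; have h3 := lt_le_trans h2 h1.
  rewrite ltr_pdivrMr // in h3; lra.
have Hup : n%:R^-1 * w n <= sup S.
  by apply: sup_upper_bound => //; exists n.
pose q := (n %/ k)%N; pose r := (n %% k)%N.
have Hn_eq : n = (q * k + r)%N by apply: divn_eq.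
have rk : (r < k)%N by rewrite ltn_pmod.
have Hr : - A <= w r.
  have : `|w r| <= A.
    rewrite /A (bigD1 (Ordinal rk)) //= lerDl.
    by apply: sumr_ge0 => i _.
  have := ler_norm (- w r); rewrite normrN; lra.
have Hq : q%:R * w k - A <= w n.
  case Eq : q => [|q'].
    by rewrite mul0r sub0r Hn_eq Eq mul0n add0n.
  rewrite Hn_eq Eq; apply: le_trans (Hw _ _).
  have := @superadd_mul _ w Hw q' k; lra.
have Hnk : n%:R / k%:R = q%:R + r%:R / k%:R :> R.
  by rewrite Hn_eq natrD natrM mulrDl mulfK // gt_eqF.
have Hqk : (n%:R / k%:R) * w k - `|w k| <= q%:R * w k.
  have -> : q%:R = n%:R / k%:R - r%:R / k%:R :> R by rewrite Hnk; lra.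
  rewrite mulrBl; have : r%:R / k%:R * w k <= `|w k|.
    apply: le_trans (_ : r%:R / k%:R * `|w k| <= _).
      by rewrite ler_wpM2l ?divr_ge0 ?ler0n ?ler_norm.
    by apply: ler_piMl; [exact: normr_ge0 | rewrite ler_pdivrMr // mul1r ler_nat ltnW].
  lra.
have Hlow : sup S - e / 2 - n%:R^-1 * C <= n%:R^-1 * w n.
  have H1 : n%:R^-1 * ((n%:R / k%:R) * w k) = k%:R^-1 * w k.
    by rewrite mulrA mulrA mulVf ?gt_eqF // mul1r.
  have H2 : n%:R^-1 * ((n%:R / k%:R) * w k - `|w k| - A) <= n%:R^-1 * w n.
    apply: ler_wpM2l; [by rewrite invr_ge0 ltW | lra].
  have H3 : n%:R^-1 * (`|w k| + A) <= n%:R^-1 * C.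
    apply: ler_wpM2l; [by rewrite invr_ge0 ltW | rewrite /C; lra].
  have H2' : n%:R^-1 * ((n%:R / k%:R) * w k) - n%:R^-1 * (`|w k| + A) <= n%:R^-1 * w n.
    by rewrite -mulrBr opprD addrA.
  rewrite H1 in H2'; lra.
have HK : n%:R^-1 * K <= n%:R^-1 * C.
  apply: ler_wpM2l; [by rewrite invr_ge0 ltW | rewrite /C; have := normr_ge0 (w k); lra].
have Hun : n%:R^-1 * u n = n%:R^-1 * w n + n%:R^-1 * K.
  by rewrite -mulrDr /w subrK.
have HK0 : 0 <= n%:R^-1 * K by apply: mulr_ge0 => //; rewrite invr_ge0 ltW.
rewrite Hun ler_norml; apply/andP; split; lra.
Qed.

Lemma key_ineq (R : realType) (r d s : R) : 0 <= r -> 0 <= d -> r + d <= s -> s < 1 ->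
  expR (- (d / (1 - s))) * (1 - r) <= 1 - (r + d).
Proof.
move=> r0 d0 rds s1.
have p1 : 0 < 1 - (r + d) by lra.
have p2 : 0 < 1 - s by lra.
set x := d / (1 - (r + d)).
have hx : expR (- (d / (1 - s))) <= expR (- x).
  rewrite ler_expR lerN2 /x ler_wpM2l // ler_pV2 ?inE ?unitfE ?gt_eqF ?p1 ?p2 //; lra.
have h1 : 1 - r = (1 + x) * (1 - (r + d)).
  by rewrite /x mulrDl mul1r mulfVK ?gt_eqF //; lra.
have h2 : expR (- x) * (1 + x) <= 1.
  have : 1 + x <= expR x := expR_ge1Dx x.
  move=> h; apply: le_trans (_ : expR (- x) * expR x <= 1).
    by rewrite ler_wpM2l // ltW // expR_gt0.
  by rewrite -expRD addNr expR0.
apply: le_trans (_ : expR (- x) * (1 - r) <= _).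
  by rewrite ler_wpM2r // subr_ge0; lra.
rewrite h1 mulrA; apply: le_trans (_ : 1 * (1 - (r + d)) <= _); last by rewrite mul1r.
by rewrite ler_wpM2r // ltW.
Qed.

Lemma conc_split (R : realType) (g : R -> R) (n m : nat) (X Y : R) :
  concave_on01 g -> 0 <= X <= n%:R -> 0 <= Y <= m%:R ->
  n%:R * g (X / n%:R) + m%:R * g (Y / m%:R) <= (n + m)%:R * g ((X + Y) / (n + m)%:R).
Proof.
move=> hg /andP[X0 Xn] /andP[Y0 Ym].
case: n Xn => [|n] Xn.
  have -> : X = 0 by apply/eqP; rewrite eq_le X0 Xn.
  by rewrite mul0r add0r add0n add0r.
case: m Ym => [|m] Ym.
  have -> : Y = 0 by apply/eqP; rewrite eq_le Y0 Ym.
  by rewrite mul0r addr0 addn0 addr0.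
set N := n.+1%:R; set M := m.+1%:R.
have N0 : 0 < N by rewrite ltr0n. have M0 : 0 < M by rewrite ltr0n.
have NM : (n.+1 + m.+1)%:R = N + M :> R by rewrite natrD.
rewrite NM.
have NM0 : 0 < N + M by lra.
set t := N / (N + M).
have t1 : 1 - t = M / (N + M).
  by rewrite /t -[1](divff (lt0r_neq0 NM0)) -mulrBl; congr (_ / _); lra.
have hx : 0 <= X / N <= 1 by apply/andP; split; [rewrite divr_ge0 // ltW | rewrite ler_pdivrMr // mul1r].
have hy : 0 <= Y / M <= 1 by apply/andP; split; [rewrite divr_ge0 // ltW | rewrite ler_pdivrMr // mul1r].
have ht : 0 <= t <= 1.
  by apply/andP; split; [rewrite /t divr_ge0 // ltW | rewrite /t ler_pdivrMr // mul1r; lra].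
have := hg _ _ _ hx hy ht.
have -> : t * (X / N) + (1 - t) * (Y / M) = (X + Y) / (N + M).
  rewrite t1 /t; field.
  by rewrite !lt0r_neq0.
move=> h.
have := ler_wpM2l (ltW NM0) h.
have -> : (N + M) * (t * g (X / N) + (1 - t) * g (Y / M)) = N * g (X / N) + M * g (Y / M).
  rewrite t1 /t; field; exact: lt0r_neq0.
by [].
Qed.

Lemma D_bound (R : realType) (a : R^nat) : (forall i, 0 <= a i) -> forall m n,
  \sum_(0 <= k < m) \sum_(0 <= t < n) a (k + t.+1)%N <= \sum_(0 <= l < n + m) l%:R * a l.
Proof.
move=> ha m; elim: m a ha => [|m IH] a ha n.
  rewrite big_geq //; apply: sumr_ge0 => i _; apply: mulr_ge0 => //.
rewrite big_nat_recl //= addnS big_nat_recl //= mul0r add0r.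
have := IH (fun i => a i.+1) (fun i => ha _) n => /= h1.
under [X in _ <= X]eq_bigr do rewrite -natr1 mulrDl mul1r.
rewrite big_split /= addrC; apply: lerD; last exact: h1.
under eq_bigr do rewrite add0n.
rewrite [X in _ <= X](@big_cat_nat _ _ _ n) //= ?leq_addr // lerDl.
by apply: sumr_ge0 => i _.
Qed.

Lemma rate_sum_bound (R : realType) (a : R^nat) (N j : nat) : (forall i, 0 <= a i) ->
  a 0%N + \sum_(i < N | (i < j)%N) a (j - i)%N <= series a j.+1.
Proof.
move=> ha.
rewrite /series /= big_nat_recl // lerD2l.
rewrite -(big_mkord (fun i => (i < j)%N) (fun i => a (j - i)%N)).
apply: le_trans (_ : \sum_(0 <= i < N + j | (i < j)%N) a (j - i)%N <= _).
  rewrite (big_nat_widen 0 N (N + j)) ?leq_addr //.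
  rewrite big_mkcond [X in _ <= X]big_mkcond /=; apply: ler_sum_nat => i _.
  by case: (i < j)%N; case: (i < N)%N => //=.
rewrite -(big_nat_widen 0 j (N + j) xpredT) ?leq_addl //.
rewrite big_nat_rev /= add0n.
by apply: ler_sum_nat => i /andP[_ ij]; rewrite subKn.
Qed.

Section Paths.
Variable R : realType.
Variable a : R^nat.

Definition fconcat n m (x : {ffun 'I_n -> bool}) (y : {ffun 'I_m -> bool}) :
  {ffun 'I_(n + m) -> bool} :=
  [ffun i => match fintype.split i with inl j => x j | inr k => y k end].
Arguments fconcat {n m}.

Lemma fconcat_l n m (x : {ffun 'I_n -> bool}) (y : {ffun 'I_m -> bool}) (i : 'I_n) : fconcat x y (lshift m i) = x i.
Proof. by rewrite ffunE; have := unsplitK (inl _ i) => /= ->. Qed.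

Lemma fconcat_r n m (x : {ffun 'I_n -> bool}) (y : {ffun 'I_m -> bool}) (k : 'I_m) : fconcat x y (rshift n k) = y k.
Proof. by rewrite ffunE; have := unsplitK (inr _ k) => /= ->. Qed.

Lemma rate_l n m (x : {ffun 'I_n -> bool}) (y : {ffun 'I_m -> bool}) (i : 'I_n) :
  dthp_rate a (fconcat x y) (lshift m i) = dthp_rate a x i.
Proof.
rewrite /dthp_rate big_split_ord /= [X in _ + (_ + X)]big_pred0 ?addr0.
  by congr (_ + _); apply: eq_bigr => i' _; rewrite fconcat_l.
move=> k /=; apply/negbTE; rewrite -leqNgt.
exact: leq_trans (ltnW (ltn_ord i)) (leq_addr _ _).
Qed.

Lemma rate_r n m (x : {ffun 'I_n -> bool}) (y : {ffun 'I_m -> bool}) (k : 'I_m) :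
  dthp_rate a (fconcat x y) (rshift n k) =
  dthp_rate a y k + \sum_(i < n) a (n + k - i)%N * (x i)%:R.
Proof.
rewrite /dthp_rate big_split_ord /= addrC addrA; congr (_ + _).
  congr (_ + _); apply: eq_big => [k'|k' _] /=.
    by rewrite ltn_add2l.
  by rewrite fconcat_r subnDl.
apply: eq_big => [i|i _] /=.
  by apply: leq_trans (ltn_ord i) (leq_addr _ _).
by rewrite fconcat_l.
Qed.


Hypothesis ha : forall i, 0 < a i.
Hypothesis hs : cvgn (series a).
Hypothesis hs1 : limn (series a) < 1.
Hypothesis hM : cvgn (series (fun i => i%:R * a i)).

Let s := limn (series a).
Let M := limn (series (fun i => i%:R * a i)).
Let ha0 i : 0 <= a i := ltW (ha i).

Lemma rate_le_s N (w : {ffun 'I_N -> bool}) j : dthp_rate a w j <= s.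
Proof.
apply: le_trans (_ : a 0%N + \sum_(i < N | (i < j)%N) a (j - i)%N <= _).
  rewrite lerD2l; apply: ler_sum => i _.
  by case: (w i); rewrite ?mulr1 ?mulr0.
apply: le_trans (@rate_sum_bound R a N j ha0) _.
apply: nondecreasing_cvgn_le => //.
by apply: nondecreasing_series => k _ _.
Qed.
Arguments rate_le_s {N}.


Lemma rate_gt0 N (w : {ffun 'I_N -> bool}) j : 0 < dthp_rate a w j.
Proof.
rewrite /dthp_rate; apply: (lt_le_trans (ha 0%N)); rewrite lerDl.
by apply: sumr_ge0 => i _; apply: mulr_ge0 => //; apply: ler0n.
Qed.
Arguments rate_gt0 {N}.


Lemma M_ge0 : 0 <= M.
Proof.
have -> : 0 = series (fun i => i%:R * a i) 0%N by rewrite /series /= big_geq.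
apply: nondecreasing_cvgn_le => //.
by apply: nondecreasing_series => k _ _; apply: mulr_ge0.
Qed.

Lemma delta_bound n m (x : {ffun 'I_n -> bool}) :
  \sum_(k < m) \sum_(i < n) a (n + k - i)%N * (x i)%:R <= M.
Proof.
apply: le_trans (_ : \sum_(0 <= k < m) \sum_(0 <= t < n) a (k + t.+1)%N <= _).
  rewrite -(big_mkord xpredT (fun k : nat => \sum_(i < n) a (n + k - i)%N * (x i)%:R)).
  apply: ler_sum_nat => k _.
  apply: le_trans (_ : \sum_(i < n) a (n + k - i)%N <= _).
    by apply: ler_sum => i _; case: (x _); rewrite ?mulr1 ?mulr0.
  rewrite -(big_mkord xpredT (fun i : nat => a (n + k - i)%N)).
  rewrite big_nat_rev /= add0n; apply: ler_sum_nat => i /andP[_ hi].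
  have -> : (n + k - (n - i.+1))%N = (k + i.+1)%N by lia.
  by [].
apply: le_trans (@D_bound R a ha0 m n) _.
apply: nondecreasing_cvgn_le => //.
by apply: nondecreasing_series => k _ _; apply: mulr_ge0.
Qed.


Let K := M / (1 - s).

Lemma K_ge0 : 0 <= K.
Proof. by apply: divr_ge0; [exact: M_ge0 | rewrite subr_ge0 ltW]. Qed.

Lemma factor_bounds N (w : {ffun 'I_N -> bool}) j :
  0 <= (if w j then dthp_rate a w j else 1 - dthp_rate a w j) <= 1.
Proof.
have h1 := rate_gt0 w j; have h2 := rate_le_s w j.
have : s < 1 := hs1.
by case: (w j) => hs1'; apply/andP; split; lra.
Qed.
Arguments factor_bounds {N}.


Lemma pathprob_split n m (x : {ffun 'I_n -> bool}) (y : {ffun 'I_m -> bool}) :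
  dthp_pathprob a x * (expR (- K) * dthp_pathprob a y) <=
  dthp_pathprob a (fconcat x y).
Proof.
rewrite /dthp_pathprob big_split_ord /=.
have -> : \prod_(i < n) (if fconcat x y (lshift m i) then dthp_rate a (fconcat x y) (lshift m i)
      else 1 - dthp_rate a (fconcat x y) (lshift m i)) =
    \prod_(j < n) (if x j then dthp_rate a x j else 1 - dthp_rate a x j).
  by apply: eq_bigr => i _; rewrite fconcat_l rate_l.
apply: ler_wpM2l; first by apply: prodr_ge0 => j _; case/andP: (factor_bounds x j).
pose d (k : 'I_m) := \sum_(i < n) a (n + k - i)%N * (x i)%:R.
have d0 k : 0 <= d k by apply: sumr_ge0 => i _; apply: mulr_ge0 => //; apply: ler0n.
have s1 : 0 < 1 - s by rewrite subr_gt0.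
apply: le_trans (_ : \prod_(k < m) (expR (- (d k / (1 - s))) *
     (if y k then dthp_rate a y k else 1 - dthp_rate a y k)) <= _).
  rewrite big_split /=; apply: ler_wpM2r.
    by apply: prodr_ge0 => j _; case/andP: (factor_bounds y j).
  rewrite -expR_sum ler_expR sumrN lerN2 -mulr_suml /K.
  apply: ler_wpM2r; first by rewrite invr_ge0 ltW.
  exact: delta_bound.
apply: ler_prod => k _; apply/andP; split.
  apply: mulr_ge0; first exact: expR_ge0.
  by case/andP: (factor_bounds y k).
have hr := rate_gt0 y k.
have hr' := rate_le_s (fconcat x y) (rshift n k).
rewrite fconcat_r rate_r -/(d k) in hr' *.
case: (y k).
  apply: le_trans (_ : 1 * dthp_rate a y k <= _).
    apply: ler_wpM2r; first exact: ltW.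
    rewrite expR_le1 oppr_le0; apply: divr_ge0 => //; exact: ltW.
  by rewrite mul1r lerDl.
apply: key_ineq; [exact: ltW | exact: d0 | exact: hr' | exact: hs1].
Qed.


Lemma factor_gt0 N (w : {ffun 'I_N -> bool}) j :
  0 < (if w j then dthp_rate a w j else 1 - dthp_rate a w j).
Proof.
have h1 := rate_gt0 w j; have h2 := rate_le_s w j.
have : s < 1 := hs1.
by case: (w j) => hs1'; lra.
Qed.
Arguments factor_gt0 {N}.

Lemma pathprob_gt0 N (w : {ffun 'I_N -> bool}) : 0 < dthp_pathprob a w.
Proof. by apply: prodr_gt0 => j _; apply: factor_gt0. Qed.

Lemma pathprob_le1 N (w : {ffun 'I_N -> bool}) : dthp_pathprob a w <= 1.
Proof. by apply: prodr_ile1 => j _; apply: factor_bounds. Qed.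

Lemma H_concat n m (x : {ffun 'I_n -> bool}) (y : {ffun 'I_m -> bool}) :
  dthp_H (fconcat x y) = dthp_H x + dthp_H y :> R.
Proof.
rewrite /dthp_H big_split_ord; congr (_ + _); apply: eq_bigr => i _.
  by rewrite fconcat_l. by rewrite fconcat_r.
Qed.

Lemma H_bounds N (w : {ffun 'I_N -> bool}) : 0 <= (dthp_H w : R) <= N%:R.
Proof.
apply/andP; split; first by apply: sumr_ge0 => i _; apply: ler0n.
apply: le_trans (_ : \sum_(j < N) (1 : R) <= _).
  by apply: ler_sum => j _; case: (w j).
by rewrite sumr_const card_ord.
Qed.

Variable g : R -> R.
Hypothesis hg : concave_on01 g.

Lemma expect_gt0 n : 0 < dthp_expect a g n.
Proof.
rewrite /dthp_expect (bigD1 [ffun _ => false]) //=.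
apply: lt_le_trans (_ : dthp_pathprob a [ffun _ : 'I_n => false] *
   expR (n%:R * g (dthp_H [ffun _ : 'I_n => false] / n%:R)) + 0 <= _).
  by rewrite addr0 mulr_gt0 ?expR_gt0 ?pathprob_gt0.
rewrite lerD2l; apply: sumr_ge0 => x _.
by rewrite mulr_ge0 ?expR_ge0 // ltW // pathprob_gt0.
Qed.

Definition fleft n m (z : {ffun 'I_(n + m) -> bool}) : {ffun 'I_n -> bool} :=
  [ffun i => z (lshift m i)].
Definition fright n m (z : {ffun 'I_(n + m) -> bool}) : {ffun 'I_m -> bool} :=
  [ffun i => z (rshift n i)].
Arguments fleft {n m}. Arguments fright {n m}.

Lemma expect_split n m :
  expR (- K) * (dthp_expect a g n * dthp_expect a g m) <= dthp_expect a g (n + m).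
Proof.
rewrite /dthp_expect.
rewrite (reindex (fun p : {ffun 'I_n -> bool} * {ffun 'I_m -> bool} => fconcat p.1 p.2)) /=; last first.
  exists (fun z => (fleft z, fright z)) => [[x y] _|z _] /=.
    by congr (_, _); apply/ffunP => i; rewrite ffunE ?fconcat_l ?fconcat_r.
  apply/ffunP => i; rewrite ffunE.
  case E: (fintype.split i) => [j|k]; have := splitK i; rewrite E /= => <-; 
    by rewrite ffunE.
rewrite -(pair_bigA _ (fun x y => dthp_pathprob a (fconcat x y) *
   expR ((n + m)%:R * g (dthp_H (fconcat x y) / (n + m)%:R)))) /=.
rewrite mulr_suml mulr_sumr; apply: ler_sum => x _.
rewrite mulr_sumr mulr_sumr; apply: ler_sum => y _.
rewrite H_concat.
apply: le_trans (_ : (dthp_pathprob a x * (expR (- K) * dthp_pathprob a y)) *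
   (expR (n%:R * g (dthp_H x / n%:R)) * expR (m%:R * g (dthp_H y / m%:R))) <= _).
  by rewrite le_eqVlt; apply/orP; left; apply/eqP; ring.
apply: ler_pM.
- by rewrite !mulr_ge0 ?expR_ge0 // ltW // pathprob_gt0.
- by rewrite mulr_ge0 ?expR_ge0.
- exact: pathprob_split.
rewrite -expRD ler_expR; apply: conc_split => //; exact: H_bounds.
Qed.


Lemma expect_le (G : R) : (forall t, 0 <= t <= 1 -> g t <= G) ->
  forall n, dthp_expect a g n <= expR (n%:R * (G + 1)).
Proof.
move=> hG n.
apply: le_trans (_ : \sum_(x : {ffun 'I_n -> bool}) expR (n%:R * G) <= _).
  apply: ler_sum => x _.
  rewrite -[X in _ <= X]mul1r; apply: ler_pM.
  - exact: ltW (pathprob_gt0 _ x).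
  - exact: expR_ge0.
  - exact: pathprob_le1 _ x.
  rewrite ler_expR; apply: ler_wpM2l; first exact: ler0n.
  apply: hG; have /andP[h0 h1] := H_bounds _ x.
  apply/andP; split; first by apply: divr_ge0 => //; apply: ler0n.
  case: n x h0 h1 => [|n] x h0 h1; first by rewrite invr0 mulr0.
  by rewrite ler_pdivrMr ?ltr0n // mul1r.
rewrite sumr_const card_ffun card_bool card_ord -[X in X <= _]mulr_natr natrX.
rewrite mulrDr expRD ler_wpM2l ?expR_ge0 // mulr1.
have -> : expR (n%:R) = expR 1 ^+ n :> R by rewrite -expRM_natl mulr1.
apply: lerXn2r; rewrite ?nnegrE ?ler0n ?expR_ge0 //.
by have := expR_ge1Dx (1 : R); rewrite (_ : 1 + 1 = 2).
Qed.
End Paths.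

Theorem lemma4p4 (R : realType) (a : R^nat) (g : R -> R) :
  dthp_kernel a ->
  {within `[0, 1], continuous g} ->
  concave_on01 g ->
  exists Gamma : R,
    (fun n : nat => n%:R^-1 * ln (dthp_expect a g n)) @ \oo --> Gamma.
Proof.
move=> [ha [hs [hs1 hM]]] gc hg.
have [c _ Gmax] := EVT_max (@ler01 R) gc.
have hG : forall t, 0 <= t <= 1 -> g t <= g c.
  by move=> t ht; apply: Gmax; rewrite in_itv /=.
have [||L HL] := @fekete R (fun n => ln (dthp_expect a g n)) _ (g c + 1) (K_ge0 _ _ ha hs1 hM); last by exists L.
  move=> n m /=.
  have h := expect_split _ _ ha hs hs1 hM g hg n m.
  have p1 := expect_gt0 _ _ ha hs hs1 g n; have p2 := expect_gt0 _ _ ha hs hs1 g m.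
  have p3 := expect_gt0 _ _ ha hs hs1 g (n + m).
  rewrite -ler_ln ?posrE ?mulr_gt0 ?expR_gt0 // in h.
  by rewrite !lnM ?posrE ?mulr_gt0 ?expR_gt0 // expRK in h; lra.
move=> n; have := expect_le _ _ ha hs hs1 g _ hG n.
have p1 := expect_gt0 _ _ ha hs hs1 g n.
by rewrite -ler_ln ?posrE ?expR_gt0 // expRK.
Qed.
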